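(* Let $1\le r\le\infty$ and let $P=U(\mathbb R^p)$ and $Q=V(\mathbb R^q)$ be nonzero linear subspaces of $\mathbb R^n$, where $U\in\mathbb R^{n\times p}$ and $V\in\mathbb R^{n\times q}$ have orthonormal columns. Let $\theta_{\max}(P,Q)\in[0,\pi/2]$ be defined by $\cos\theta_{\max}(P,Q)=\sigma_{\min}(V^\top U)$, the smallest singular value of $V^\top U$. Then $${\rm Dis}_r(P,Q)=2\left\|\left(\tfrac{\sqrt2}{2},\ \sin\left[\tfrac{\theta_{\max}(P,Q)}{2}\right]\right)\right\|_r\quad\text{if } p\ne q,$$ $${\rm Dis}_r(P,Q)=2\|(1,1)\|_r\,\sin\left[\tfrac{\theta_{\max}(P,Q)}{2}\right]\quad\text{if } p=q.$$
   Context: $S_n$ is the unit sphere of $\mathbb R^n$. For nonzero closed convex cones $P,Q$: $\Theta(P,Q):=\max_{u\in P\cap S_n}\min_{v\in Q\cap S_n}\arccos\langle u,v\rangle$ and ${\rm Dis}_r(P,Q):=2\left\|\left(\sin[\Theta(P,Q)/2],\ \sin[\Theta(Q,P)/2]\right)\right\|_r$, where $\|\cdot\|_r$ is the $\ell^r$-norm on $\mathbb R^2$. (Equivalently ${\rm Dis}_r(P,Q)=\|(\Lambda(P\cap S_n,Q\cap S_n),\Lambda(Q\cap S_n,P\cap S_n))\|_r$ with $\Lambda(C,D)=\max_{x\in C}\min_{y\in D}\|x-y\|$.) $\theta_{\max}(P,Q)$ is the largest principal angle between $P$ and $Q$. *)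

(* Defs.v *)
From HB Require Import structures.
From mathcomp Require Import all_boot all_order all_algebra.
From mathcomp Require Import all_classical all_reals all_analysis.
Set Implicit Arguments. Unset Strict Implicit. Unset Printing Implicit Defensive.
Import Order.TTheory GRing.Theory Num.Theory.
Local Open Scope classical_set_scope.
Local Open Scope ring_scope.

Section Defs.
Variable R : realType.

Definition dotv (n : nat) (u v : 'cV[R]_n) : R := (u^T *m v) 0 0.

Definition unit_sphere (n : nat) : set 'cV[R]_n := [set u | dotv u u = 1].

Definition colspan (n p : nat) (U : 'M[R]_(n, p)) : set 'cV[R]_n :=
  [set u | exists x : 'cV[R]_p, u = U *m x].

(* Theta(P,Q) = max_{u in P cap S_n} min_{v in Q cap S_n} arccos <u,v>
   (max/min are attained by compactness; written as sup/inf). *)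
Definition Theta (n : nat) (P Q : set 'cV[R]_n) : R :=
  sup [set inf [set acos (dotv u v) | v in Q `&` @unit_sphere n]
      | u in P `&` @unit_sphere n].

(* l^r norm on R^2, r in [1, +oo] (the -oo case is never used). *)
Definition lrnorm2 (r : \bar R) (a b : R) : R :=
  match r with
  | EFin s => powR (powR `|a| s + powR `|b| s) s^-1
  | _ => Num.max `|a| `|b|
  end.

Definition Dis (n : nat) (r : \bar R) (P Q : set 'cV[R]_n) : R :=
  2 * lrnorm2 r (sin (Theta P Q / 2)) (sin (Theta Q P / 2)).

(* Smallest singular value of a q x p matrix A: the square root of the
   smallest eigenvalue of the Gram matrix of size min(p,q). *)
Definition sigma_min (q p : nat) (A : 'M[R]_(q, p)) : R :=
  if (q <= p)%N then Num.sqrt (inf [set a | eigenvalue (A *m A^T) a])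
  else Num.sqrt (inf [set a | eigenvalue (A^T *m A) a]).

Definition theta_max (n p q : nat) (U : 'M[R]_(n, p)) (V : 'M[R]_(n, q)) : R :=
  acos (sigma_min (V^T *m U)).

End Defs.

(* Main.v *)
Require Import Defs.
From HB Require Import structures.
From mathcomp Require Import all_boot all_order all_algebra.
From mathcomp Require Import all_classical all_reals all_analysis.
From mathcomp Require Import ring lra.
Set Implicit Arguments. Unset Strict Implicit. Unset Printing Implicit Defensive.
Import Order.TTheory GRing.Theory Num.Theory.
Local Open Scope classical_set_scope.
Local Open Scope ring_scope.
Section Dot.
Variable R : realType.
Implicit Types (m : nat).

Lemma dotvE m (u v : 'cV[R]_m) : dotv u v = \sum_i u i 0 * v i 0.
Proof. by rewrite /dotv mxE; apply: eq_bigr => i _; rewrite mxE. Qed.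

Lemma dotvC m (u v : 'cV[R]_m) : dotv u v = dotv v u.
Proof. by rewrite !dotvE; apply: eq_bigr => i _; rewrite mulrC. Qed.

Lemma dotvDl m (u w v : 'cV[R]_m) : dotv (u + w) v = dotv u v + dotv w v.
Proof. by rewrite !dotvE -big_split; apply: eq_bigr => i _; rewrite mxE mulrDl. Qed.

Lemma dotvZl m a (u v : 'cV[R]_m) : dotv (a *: u) v = a * dotv u v.
Proof. by rewrite !dotvE mulr_sumr; apply: eq_bigr => i _; rewrite mxE mulrA. Qed.

Lemma dotvNl m (u v : 'cV[R]_m) : dotv (- u) v = - dotv u v.
Proof. by rewrite -scaleN1r dotvZl mulN1r. Qed.

Lemma dotvDr m (u w v : 'cV[R]_m) : dotv v (u + w) = dotv v u + dotv v w.
Proof. by rewrite dotvC dotvDl !(dotvC v). Qed.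

Lemma dotvZr m a (u v : 'cV[R]_m) : dotv v (a *: u) = a * dotv v u.
Proof. by rewrite dotvC dotvZl dotvC. Qed.

Lemma dotvNr m (u v : 'cV[R]_m) : dotv v (- u) = - dotv v u.
Proof. by rewrite dotvC dotvNl dotvC. Qed.

Lemma dotv_ge0 m (u : 'cV[R]_m) : 0 <= dotv u u.
Proof. by rewrite dotvE; apply: sumr_ge0 => i _; rewrite -expr2 sqr_ge0. Qed.

Lemma dotv_eq0 m (u : 'cV[R]_m) : dotv u u = 0 -> u = 0.
Proof.
rewrite dotvE => /eqP; rewrite psumr_eq0 => [/allP H|i _]; last by rewrite -expr2 sqr_ge0.
apply/matrixP => i j; rewrite (ord1 j) mxE.
by have := H i (mem_index_enum _); rewrite /= -expr2 sqrf_eq0 => /eqP.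
Qed.

Lemma dotv_mull k m (M : 'M[R]_(k, m)) u v : dotv (M *m u) v = dotv u (M^T *m v).
Proof. by rewrite /dotv trmx_mul mulmxA. Qed.

Lemma dotv_gt0 m (u : 'cV[R]_m) : u != 0 -> 0 < dotv u u.
Proof.
move=> u0; rewrite lt_def dotv_ge0 andbT; apply/eqP => /dotv_eq0 h.
by rewrite h eqxx in u0.
Qed.

Lemma normalize m (u : 'cV[R]_m) : u != 0 ->
  exists2 c : R, 0 < c & exists2 x, dotv x x = 1 & u = c *: x.
Proof.
move=> u0; have h := dotv_gt0 u0; set d := dotv u u in h *.
have sq : 0 < Num.sqrt d by rewrite sqrtr_gt0.
exists (Num.sqrt d) => //; exists ((Num.sqrt d)^-1 *: u).
  rewrite dotvZl dotvZr mulrA -expr2 exprVn sqr_sqrtr ?ltW //.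
  by rewrite mulVf // gt_eqF.
by rewrite scalerA mulfV ?gt_eqF // scale1r.
Qed.

Lemma CS m (a b : 'cV[R]_m) : dotv b b = 1 -> dotv a b ^+ 2 <= dotv a a.
Proof.
move=> hb; have := dotv_ge0 (a - dotv a b *: b).
rewrite dotvDl !dotvDr !dotvNl !dotvNr !dotvZl !dotvZr hb (dotvC b a).
move=> h; nra.
Qed.

Lemma CS_abs m (a b : 'cV[R]_m) : dotv b b = 1 -> `|dotv a b| <= Num.sqrt (dotv a a).
Proof.
move=> hb; rewrite -sqrtr_sqr; rewrite ler_sqrt ?dotv_ge0 //; exact: CS.
Qed.

End Dot.
Section Kernel.
Variable R : realType.

Lemma kernel_vec k m (M : 'M[R]_(k, m)) : (\rank M < k)%N ->
  exists2 w : 'rV_k, w != 0 & w *m M = 0.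
Proof.
move=> hr; have : kermx M != 0.
  apply/eqP => h; move: (mxrank_ker M); rewrite h mxrank0 => /eqP.
  by rewrite eq_sym subn_eq0 leqNgt hr.
move=> /eqP hK.
have [i hi] : exists i, row i (kermx M) != 0.
  apply/existsP; apply: contraT; rewrite negb_exists => /forallP h.
  exfalso; apply: hK; apply/row_matrixP => i; rewrite row0.
  by have := h i; rewrite negbK => /eqP.
by exists (row i (kermx M)) => //; rewrite -row_mul mulmx_ker row0.
Qed.

Lemma kernel_rank k m (M : 'M[R]_(k, m)) (w : 'rV_k) : w != 0 -> w *m M = 0 ->
  (\rank M < k)%N.
Proof.
move=> w0 wM; rewrite ltn_neqAle rank_leq_row andbT.
apply/negP => /eqP hf; have : row_free M by rewrite /row_free hf.
move=> /row_freeP [B hB]; move/eqP: w0; apply.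
by rewrite -(mulmx1 w) -hB mulmxA wM mul0mx.
Qed.

End Kernel.

Section Core.
Variable R : realType.
Variables (k m : nat) (A : 'M[R]_(k, m)).
Hypothesis hm : (0 < m)%N.

Let Q (x : 'cV[R]_m) := dotv (A *m x) (A *m x).
Let S := [set Q x | x in [set x : 'cV[R]_m | dotv x x = 1]].
Let mu := inf S.
Let M := A^T *m A.

Lemma dotv0l n (x : 'cV[R]_n) : dotv 0 x = 0.
Proof. by rewrite -(scale0r (0 : 'cV[R]_n)) dotvZl mul0r. Qed.

Lemma e0_unit : dotv (delta_mx (Ordinal hm) 0 : 'cV[R]_m) (delta_mx (Ordinal hm) 0) = 1.
Proof. by rewrite /dotv trmx_delta mul_delta_mx mxE !eqxx. Qed.

Let S0 : S !=set0.
Proof. by exists (Q (delta_mx (Ordinal hm) 0)); exists (delta_mx (Ordinal hm) 0) => //; exact: e0_unit. Qed.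

Let Slb : lbound S 0.
Proof. by move=> _ [x _ <-]; exact: dotv_ge0. Qed.

Let Shl : has_lbound S.
Proof. by exists 0. Qed.

Lemma mu_ge0 : 0 <= mu.
Proof. exact: lb_le_inf. Qed.

Lemma mu_le x : dotv x x = 1 -> mu <= Q x.
Proof. by move=> hx; apply: ge_inf => //; exists x. Qed.

Lemma QZ c x : Q (c *: x) = c ^+ 2 * Q x.
Proof. by rewrite /Q -scalemxAr dotvZl dotvZr mulrA expr2. Qed.

Lemma mu_le_gen x : mu * dotv x x <= Q x.
Proof.
have [->|x0] := eqVneq x 0.
  by rewrite /Q mulmx0 !dotv0l mulr0.
have [c c0 [y hy ->]] := normalize x0.
rewrite QZ dotvZl dotvZr hy mulr1 -expr2 mulrC ler_pM2l ?exprn_gt0 //.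
exact: mu_le.
Qed.

Lemma QE x : Q x = dotv x (M *m x).
Proof. by rewrite /Q dotv_mull /M mulmxA. Qed.

Lemma Msym : M^T = M.
Proof. by rewrite /M trmx_mul trmxK. Qed.

Lemma eig_ge l : eigenvalue M l -> mu <= l.
Proof.
move=> /eigenvalueP [v hv v0].
have xe : M *m v^T = l *: v^T by rewrite -Msym -trmx_mul hv linearZ.
have x0 : v^T != 0 by apply: contra v0 => /eqP h; rewrite -(trmxK v) h linear0.
have := mu_le_gen v^T; rewrite QE xe dotvZr.
by rewrite ler_pM2r // dotv_gt0.
Qed.

Lemma sq_le1 (a : R) : a ^+ 2 <= 1 -> a <= 1.
Proof. move=> h; nra. Qed.

Lemma entry_le1 (y : 'cV[R]_m) i : dotv y y = 1 -> `|y i 0| <= 1.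
Proof.
move=> hy; apply: sq_le1; rewrite real_normK ?num_real // -hy dotvE.
rewrite (bigD1 i) //= -expr2 lerDl; by apply: sumr_ge0 => j _; rewrite -expr2 sqr_ge0.
Qed.

Lemma bound_form (C : 'M[R]_m) (y : 'cV[R]_m) : dotv y y = 1 ->
  dotv y (C *m y) <= \sum_i \sum_j `|C i j|.
Proof.
move=> hy; rewrite dotvE; apply: ler_sum => i _; rewrite mxE mulr_sumr.
apply: ler_sum => j _.
apply: le_trans (ler_norm _) _; rewrite !normrM.
have h1 := entry_le1 i hy; have h2 := entry_le1 j hy.
rewrite mulrCA ler_piMr //; exact: mulr_ile1.
Qed.

Lemma mu_eig : eigenvalue M mu.
Proof.
apply: contraT => hne.
set B := M - mu%:M.
have Bu : B \in unitmx.
  by rewrite -row_free_unit -kermx_eq0; move: hne; rewrite /eigenvalue negbK.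
have Bsym : B^T = B by rewrite /B linearB /= Msym tr_scalar_mx.
have qB x : dotv x (B *m x) = Q x - mu * dotv x x.
  by rewrite /B mulmxBl mul_scalar_mx dotvDr dotvNr dotvZr QE.
set C := invmx B.
set K := \sum_i \sum_j `|C^T i j|.
have K0 : 0 <= K by apply: sumr_ge0 => i _; apply: sumr_ge0 => j _.
have eps0 : 0 < (K + 1)^-1 by rewrite invr_gt0; lra.
have [_ [y hy <-] hQ] := inf_adherent eps0 (conj S0 Shl).
set z := C^T *m y.
have BCt : B *m C^T = 1%:M.
  by rewrite -Bsym -trmx_mul /C mulVmx // trmx1.
have hzy : dotv z (B *m y) = 1.
  by rewrite /z dotv_mull trmxK mulmxA /C mulVmx // mul1mx.
have hyz : dotv y (B *m z) = 1 by rewrite /z mulmxA BCt mul1mx.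
have hzz : dotv z (B *m z) <= K.
  rewrite /z mulmxA BCt mul1mx dotvC; exact: bound_form.
set t := K + 1.
have := mu_le_gen (z - t *: y); rewrite -subr_ge0 -qB.
rewrite mulmxBr -scalemxAr dotvDl !dotvDr !dotvNl !dotvNr !dotvZl !dotvZr.
rewrite hzy hyz (qB y) hy !mulr1.
move: hQ; rewrite -/mu => hQ.
set b := Q y - mu.
have b0 : 0 <= b by rewrite subr_ge0 -[mu]mulr1 -hy mu_le_gen.
have bt : b * t < 1.
  rewrite -ltr_pdivlMr /t ?div1r /b; lra.
move: hzz; set a := dotv z (B *m z) => hzz h.
have : 0 <= a - t - t + t * t * b by lra.
have tE : t = K + 1 by [].
have t0 : 0 < t by lra.
have : t * (b * t) < t * 1 by rewrite ltr_pM2l.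
move=> h2; nra.
Qed.

Lemma inf_eigE : inf [set a | eigenvalue M a] = mu.
Proof.
apply/eqP; rewrite eq_le; apply/andP; split.
  by apply: ge_inf; [exists mu => l; apply: eig_ge | exact: mu_eig].
by apply: lb_le_inf; [exists mu; exact: mu_eig | move=> l; apply: eig_ge].
Qed.

Lemma mu_attained : exists2 x, dotv x x = 1 & M *m x = mu *: x.
Proof.
have /eigenvalueP [v hv v0] := mu_eig.
have x0 : v^T != 0 by apply: contra v0 => /eqP h; rewrite -(trmxK v) h linear0.
have [c c0 [y hy ey]] := normalize x0.
exists y => //.
have xe : M *m v^T = mu *: v^T by rewrite -Msym -trmx_mul hv linearZ.
move: xe; rewrite ey -scalemxAr scalerA mulrC -scalerA => /eqP.
by rewrite -subr_eq0 -scalerBr scaler_eq0 gt_eqF //= subr_eq0 => /eqP.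
Qed.

Lemma mu_ge0' : 0 <= inf [set a | eigenvalue M a].
Proof. rewrite inf_eigE; exact: mu_ge0. Qed.

Lemma mu_le' x : dotv x x = 1 -> inf [set a | eigenvalue M a] <= dotv (A *m x) (A *m x).
Proof. rewrite inf_eigE; exact: mu_le. Qed.

Lemma mu_att' : exists2 x, dotv x x = 1 & M *m x = inf [set a | eigenvalue M a] *: x.
Proof. rewrite inf_eigE; exact: mu_attained. Qed.

End Core.
Section Acos.
Variable R : realType.
Lemma acos_le (a b : R) : -1 <= a -> a <= b -> b <= 1 -> acos b <= acos a.
Proof.
move=> ha hab hb; rewrite leNgt; apply/negP => h.
have ia : a \in `[(-1), 1] by rewrite in_itv /=; apply/andP; split => //; lra.
have ib : b \in `[(-1), 1] by rewrite in_itv /=; apply/andP; split => //; lra.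
have ja : acos a \in `[0, pi] by rewrite in_itv /= acos_ge0 ?acos_lepi //; lra.
have jb : acos b \in `[0, pi] by rewrite in_itv /= acos_ge0 ?acos_lepi //; lra.
have := ltr_cos ja jb; rewrite h acosK // acosK // => /esym H.
lra.
Qed.
End Acos.
Section ThetaSec.
Variable R : realType.
Variables (n p q : nat) (U : 'M[R]_(n, p)) (V : 'M[R]_(n, q)).
Hypotheses (hp : (0 < p)%N) (hq : (0 < q)%N) (hU : U^T *m U = 1%:M) (hV : V^T *m V = 1%:M).

Let A := V^T *m U.

Lemma isoU x : dotv (U *m x) (U *m x) = dotv x x.
Proof. by rewrite dotv_mull mulmxA hU mul1mx. Qed.

Lemma isoV y : dotv (V *m y) (V *m y) = dotv y y.
Proof. by rewrite dotv_mull mulmxA hV mul1mx. Qed.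

Lemma dotUV x y : dotv (U *m x) (V *m y) = dotv (A *m x) y.
Proof. by rewrite dotvC dotv_mull dotvC /A mulmxA. Qed.

Lemma s_le1 x : dotv x x = 1 -> dotv (A *m x) (A *m x) <= 1.
Proof.
move=> hx; set a := A *m x.
have e : dotv (V *m a) (U *m x) = dotv a a by rewrite dotv_mull mulmxA.
have hu : dotv (U *m x) (U *m x) = 1 by rewrite isoU.
have := CS (V *m a) hu; rewrite e isoV => h.
have := dotv_ge0 a; move: h; set s := dotv a a => h h0; nra.
Qed.

Lemma inner_inf x : dotv x x = 1 ->
  inf [set acos (dotv (U *m x) v) | v in colspan V `&` @unit_sphere R n]
  = acos (Num.sqrt (dotv (A *m x) (A *m x))).
Proof.
move=> hx; set s := dotv (A *m x) (A *m x).
have s1 : Num.sqrt s <= 1 by rewrite -sqrtr1 ler_sqrt // s_le1.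
have s0 : 0 <= Num.sqrt s by [].
have lb : lbound [set acos (dotv (U *m x) v) | v in colspan V `&` @unit_sphere R n]
          (acos (Num.sqrt s)).
  move=> _ [v [[y ->] hv] <-]; rewrite /unit_sphere /= isoV in hv.
  apply: acos_le => //.
  - have hv' : dotv (V *m y) (V *m y) = 1 by rewrite isoV.
    have := CS_abs (U *m x) hv'; rewrite isoU hx sqrtr1 => /ler_normlP [h _].
    by rewrite lerNl.
  - by move: (CS_abs (A *m x) hv); rewrite dotUV -/s => /(le_trans (ler_norm _)).
have [y hy hyv] : exists2 y : 'cV[R]_q, dotv y y = 1 & dotv (A *m x) y = Num.sqrt s.
  have [a0|a0] := eqVneq (A *m x) 0.
    exists (delta_mx (Ordinal hq) 0); first exact: e0_unit.
    by rewrite /s a0 !dotv0l sqrtr0.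
  have [c c0 [y hy ey]] := normalize a0.
  exists y => //; rewrite /s ey !dotvZl !dotvZr hy !mulr1 -expr2 sqrtr_sqr gtr0_norm //.
have mem : [set acos (dotv (U *m x) v) | v in colspan V `&` @unit_sphere R n]
           (acos (Num.sqrt s)).
  exists (V *m y); first by split; [exists y | rewrite /unit_sphere /= isoV].
  by rewrite dotUV hyv.
apply/eqP; rewrite eq_le; apply/andP; split.
  by apply: ge_inf => //; exists (acos (Num.sqrt s)).
by apply: lb_le_inf => //; exists (acos (Num.sqrt s)).
Qed.

Lemma ThetaE : Theta (colspan U) (colspan V) =
  acos (Num.sqrt (inf [set a | eigenvalue ((V^T *m U)^T *m (V^T *m U)) a])).
Proof.
rewrite /Theta -/A; set mu := inf [set a | eigenvalue _ a].
set T := (X in sup X).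
have ub : ubound T (acos (Num.sqrt mu)).
  move=> _ [u [[x ->] hu] <-]; rewrite /unit_sphere /= isoU in hu.
  rewrite inner_inf //; apply: acos_le.
  - by apply: le_trans (sqrtr_ge0 _); lra.
  - by rewrite ler_sqrt ?mu_le' ?dotv_ge0.
  - by rewrite -sqrtr1 ler_sqrt // s_le1.
have [x0 hx0 ex0] := mu_att' A hp.
have mem : T (acos (Num.sqrt mu)).
  exists (U *m x0); first by split; [exists x0 | rewrite /unit_sphere /= isoU].
  by rewrite inner_inf // dotv_mull mulmxA ex0 dotvZr hx0 mulr1.
apply/eqP; rewrite eq_le; apply/andP; split.
  by apply: ge_sup => //; exists (acos (Num.sqrt mu)).
by apply: sup_upper_bound => //; split; [exists (acos (Num.sqrt mu)) | exists (acos (Num.sqrt mu))].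
Qed.

Lemma muP_le1 : inf [set a | eigenvalue ((V^T *m U)^T *m (V^T *m U)) a] <= 1.
Proof.
rewrite -/A; apply: le_trans (mu_le' A hp (e0_unit R hp)) _; apply: s_le1; exact: (e0_unit R hp).
Qed.

End ThetaSec.
Section Final.
Variable R : realType.

Lemma mu_zero k m (A : 'M[R]_(k, m)) (hm : (0 < m)%N) (x : 'cV[R]_m) : x != 0 -> A *m x = 0 ->
  inf [set a | eigenvalue (A^T *m A) a] = 0.
Proof.
move=> x0 ax; have [c c0 [y hy ey]] := normalize x0.
have ay : A *m y = 0.
  move: ax; rewrite ey -scalemxAr => /eqP; rewrite scaler_eq0 gt_eqF //=.
  by move/eqP.
apply/eqP; rewrite eq_le mu_ge0' // andbT.
by have := mu_le' A hm hy; rewrite ay dotv0l.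
Qed.

Lemma sq_le m (A : 'M[R]_m) (hm : (0 < m)%N) :
  inf [set a | eigenvalue (A^T^T *m A^T) a] <= inf [set a | eigenvalue (A^T *m A) a].
Proof.
set mu := inf [set a | eigenvalue (A^T *m A) a].
have [x0 hx0 ex0] := mu_att' A hm.
have ax0 : dotv (A *m x0) (A *m x0) = mu by rewrite dotv_mull mulmxA ex0 dotvZr hx0 mulr1.
have [a0|a0] := eqVneq (A *m x0) 0.
  have x0n : x0 != 0.
    by apply/eqP => h; move: hx0; rewrite h dotv0l => /eqP; rewrite eq_sym oner_eq0.
  have : (\rank A^T < m)%N.
    apply: (@kernel_rank _ _ _ _ x0^T).
      by apply: contra x0n => /eqP h; rewrite -(trmxK x0) h linear0.
    by rewrite -trmx_mul a0 linear0.
  rewrite mxrank_tr => /kernel_vec [w w0 wA].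
  rewrite (@mu_zero _ _ A^T hm w^T).
  - by rewrite -ax0 dotv_ge0.
  - by apply: contra w0 => /eqP h; rewrite -(trmxK w) h linear0.
  - by rewrite -trmx_mul wA linear0.
have [c c0 [y hy ey]] := normalize a0.
have := mu_le' A^T hm hy.
have e : c *: (A^T *m y) = mu *: x0 by rewrite scalemxAr -ey mulmxA.
have : dotv (c *: (A^T *m y)) (c *: (A^T *m y)) = mu ^+ 2.
  by rewrite e dotvZl dotvZr hx0 mulr1 expr2.
rewrite dotvZl dotvZr.
have : mu = c ^+ 2 by rewrite -ax0 ey dotvZl dotvZr hy mulr1 expr2.
move=> -> h; set d := dotv _ _ in h *.
have d0 : d = c ^+ 2.
  apply: (@mulfI _ (c ^+ 2)); first by rewrite expf_neq0 // gt_eqF.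
  by move: h; rewrite !expr2 mulrA => ->.
by rewrite d0.
Qed.

End Final.
Section Final2.
Variable R : realType.
Lemma lr_sym (r : \bar R) a b : lrnorm2 r a b = lrnorm2 r b a.
Proof. by case: r => [t| |] /=; [rewrite addrC | rewrite maxC | rewrite maxC]. Qed.

Lemma lr_diag (r : \bar R) s : (1 <= r)%E -> 0 <= s -> lrnorm2 r s s = lrnorm2 r 1 1 * s.
Proof.
case: r => [t| |] /= h s0; last 2 first.
- by rewrite !maxxx normr1 mul1r ger0_norm.
- by rewrite !maxxx normr1 mul1r ger0_norm.
rewrite lee_fin in h.
rewrite normr1 powR1 ger0_norm //.
have -> : s `^ t + s `^ t = (1 + 1) * s `^ t by rewrite mulrDl mul1r.
rewrite powRM; last exact: powR_ge0; last by lra.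
by rewrite -powRrM mulfV ?powRr1 //; apply/eqP => h0; rewrite h0 in h; lra.
Qed.

End Final2.
Section Final3.
Variable R : realType.
Lemma sin_pi4 : sin (pi / 2 / 2) = Num.sqrt 2 / 2 :> R.
Proof.
set a := pi / 2 / 2 : R.
have ca : cos a = sin a.
  rewrite -cosBpihalf.
  have -> : a - pi / 2 = - a by rewrite /a; field.
  by rewrite cosN.
have : sin (a *+ 2) = 1.
  have -> : a *+ 2 = pi / 2 by rewrite /a mulr2n; field.
  exact: sin_pihalf.
rewrite sin_mulr2n ca => h.
have s0 : 0 <= sin a.
  apply: sin_ge0_pi; have := pi_ge0 R; rewrite /a => hp; apply/andP; split; lra.
have q0 : 0 <= Num.sqrt 2 / 2 :> R by rewrite divr_ge0.
rewrite -(ger0_norm s0) -(ger0_norm q0) -!sqrtr_sqr; congr Num.sqrt.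
rewrite expr_div_n sqr_sqrtr //; move: h; rewrite -expr2 => h.
have -> : (2 : R) ^+ 2 = 4 by rewrite expr2; lra.
lra.
Qed.

End Final3.
Theorem mainTheorem9 (R : realType) (n p q : nat)
    (U : 'M[R]_(n, p)) (V : 'M[R]_(n, q)) (r : \bar R) :
  (0 < p)%N -> (0 < q)%N ->
  U^T *m U = 1%:M -> V^T *m V = 1%:M ->
  (1 <= r)%E ->
  Dis r (colspan U) (colspan V) =
    if p != q then
      2 * lrnorm2 r (Num.sqrt 2 / 2) (sin (theta_max U V / 2))
    else
      2 * lrnorm2 r 1 1 * sin (theta_max U V / 2).
Proof.
move=> hp hq hU hV hr.
have hle1 := muP_le1 hp hU hV.
rewrite /Dis (ThetaE hp hq hU hV) (ThetaE hq hp hV hU).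
rewrite /theta_max /sigma_min.
have tUV : U^T *m V = (V^T *m U)^T by rewrite trmx_mul trmxK.
rewrite tUV trmxK.
move: hle1; set A := V^T *m U => hle1.
set muP := inf [set a | eigenvalue (A^T *m A) a].
set muQ := inf [set a | eigenvalue (A *m A^T) a].
case: (ltngtP p q) => hpq.
- rewrite /=.
  have : (\rank A < q)%N by apply: leq_ltn_trans (rank_leq_col A) hpq.
  move=> /kernel_vec [w w0 wA].
  have -> : muQ = 0.
    rewrite /muQ -{1}(trmxK A); apply: (@mu_zero _ _ _ A^T hq w^T).
    - by apply: contra w0 => /eqP h; rewrite -(trmxK w) h linear0.
    - by rewrite -trmx_mul wA linear0.
  by rewrite sqrtr0 acos0 sin_pi4 lr_sym.
- rewrite /=.
  have : (\rank A^T < p)%N by apply: leq_ltn_trans (rank_leq_col A^T) hpq.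
  move=> /kernel_vec [w w0 wA].
  have -> : muP = 0.
    apply: (@mu_zero _ _ _ A hp w^T).
    - by apply: contra w0 => /eqP h; rewrite -(trmxK w) h linear0.
    - by rewrite -[A]trmxK -trmx_mul wA linear0.
  by rewrite sqrtr0 acos0 sin_pi4.
- subst q; rewrite /=.
  have eQ : muQ = muP.
    apply/eqP; rewrite eq_le; apply/andP; split.
      by have := sq_le A hp; rewrite trmxK.
    by have := sq_le A^T hp; rewrite !trmxK.
  rewrite eQ lr_diag ?mulrA //.
  have s0 : 0 <= Num.sqrt muP by [].
  have s1 : Num.sqrt muP <= 1 by rewrite -sqrtr1 ler_sqrt.
  have a0 : 0 <= acos (Num.sqrt muP) by apply: acos_ge0; apply/andP; split => //; lra.
  have a1 : acos (Num.sqrt muP) <= pi by apply: acos_lepi; apply/andP; split => //; lra.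
  have := pi_ge0 R => hpi.
  by apply: sin_ge0_pi; apply/andP; split; lra.
Qed.
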